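(* Consider the ODE system $$\frac{du}{dt}=\frac{a_1u}{1+fv}-b_1u^2-c_1uv,\qquad \frac{dv}{dt}=a_2v-b_2v^2-c_2uv,$$ with positive parameters $a_1,a_2,b_1,b_2,c_1,c_2$. For every value of $f\ge0$, the system has no periodic orbits in the nonnegative quadrant $\{u\ge0,v\ge0\}$.
   Context: The state space is the biologically feasible nonnegative quadrant of population densities. *)

(* Defs.v *)
From Stdlib Require Import Reals.
From Coquelicot Require Import Coquelicot.
Open Scope R_scope.

Definition rhs_u (a1 b1 c1 f u v : R) : R :=
  a1 * u / (1 + f * v) - b1 * u ^ 2 - c1 * u * v.
Definition rhs_v (a2 b2 c2 u v : R) : R :=
  a2 * v - b2 * v ^ 2 - c2 * u * v.

Definition is_solution (a1 a2 b1 b2 c1 c2 f : R) (u v : R -> R) : Prop :=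
  forall t, is_derive u t (rhs_u a1 b1 c1 f (u t) (v t)) /\
            is_derive v t (rhs_v a2 b2 c2 (u t) (v t)).

Definition in_quadrant (u v : R -> R) : Prop :=
  forall t, 0 <= u t /\ 0 <= v t.

Definition is_periodic_orbit (a1 a2 b1 b2 c1 c2 f : R) (u v : R -> R) : Prop :=
  is_solution a1 a2 b1 b2 c1 c2 f u v /\
  (exists T, 0 < T /\ forall t, u (t + T) = u t /\ v (t + T) = v t) /\
  (exists t1 t2, u t1 <> u t2 \/ v t1 <> v t2).

(* Main.v *)
Require Import Defs.
From Stdlib Require Import Reals Lra Lia Classical.
From Coquelicot Require Import Coquelicot.
Open Scope R_scope.

Lemma der_cont (f : R -> R) (t d : R) : is_derive f t d -> continuity_pt f t.
Proof. intro H. apply is_derive_Reals in H. apply derivable_continuous_pt. exists d. exact H. Qed.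

Lemma cont_eps f t : continuity_pt f t -> forall eps, 0 < eps ->
  exists del, 0 < del /\ forall s, Rabs (s - t) < del -> Rabs (f s - f t) < eps.
Proof.
  intros H eps He. destruct (H eps He) as [al [Hal H2]].
  exists al; split; auto. intros s Hs.
  destruct (Req_dec s t) as [->|Hne].
  - rewrite Rminus_eq_0, Rabs_R0; auto.
  - apply (H2 s). split. split; [exact I| auto]. exact Hs.
Qed.

Lemma mvt (f df : R -> R) : (forall t, is_derive f t (df t)) -> forall a b, a <= b ->
  exists c, a <= c <= b /\ f b - f a = df c * (b - a).
Proof.
  intros H a b Hab.
  destruct (MVT_gen f a b df) as [c [Hc E]].
  - intros; apply H.
  - intros; eapply der_cont; apply H.
  - exists c. rewrite Rmin_left, Rmax_right in Hc by lra. auto.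
Qed.

Lemma incr (f df : R -> R) (a b : R) : (forall t, is_derive f t (df t)) -> a <= b ->
  (forall c, a <= c <= b -> 0 <= df c) -> f a <= f b.
Proof.
  intros H Hab Hp. destruct (mvt f df H a b Hab) as [c [Hc E]].
  assert (0 <= df c * (b - a)) by (apply Rmult_le_pos; [apply Hp; auto| lra]). lra.
Qed.

Lemma der_neg (f : R -> R) (t d : R) : is_derive f t d -> d < 0 ->
  exists del, 0 < del /\ forall h, 0 < h < del -> f (t + h) < f t /\ f t < f (t - h).
Proof.
  intros H Hd. apply is_derive_Reals in H.
  destruct (H (- d / 2)) as [del Hdel]; [lra|].
  exists del. split; [apply cond_pos|]. intros h Hh.
  split.
  - assert (Hx := Hdel h ltac:(lra) ltac:(rewrite Rabs_right; lra)).
    apply Rabs_def2 in Hx. destruct Hx as [Hx1 Hx2].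
    assert ((f (t + h) - f t) / h < 0) by lra.
    assert (h * ((f (t + h) - f t) / h) < 0).
    { rewrite Rmult_comm. apply Rmult_neg_pos; lra. }
    replace (h * ((f (t + h) - f t) / h)) with (f (t + h) - f t) in H1 by (field; lra). lra.
  - assert (Hx := Hdel (-h) ltac:(lra) ltac:(rewrite Rabs_left; lra)).
    apply Rabs_def2 in Hx. destruct Hx as [Hx1 Hx2].
    assert ((f (t + - h) - f t) / - h < 0) by lra.
    replace (t + - h) with (t - h) in H0 by ring.
    assert (h * ((f (t - h) - f t) / - h) < 0).
    { rewrite Rmult_comm. apply Rmult_neg_pos; lra. }
    replace (h * ((f (t - h) - f t) / - h)) with (- (f (t - h) - f t)) in H1 by (field; lra). lra.
Qed.

Lemma der_max (f : R -> R) (t d : R) : is_derive f t d -> (forall s, f s <= f t) -> d = 0.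
Proof.
  intros H Hm. destruct (Rtotal_order d 0) as [Hl|[He|Hg]]; auto.
  - destruct (der_neg f t d H Hl) as [del [Hd Hf]].
    destruct (Hf (del/2) ltac:(lra)). specialize (Hm (t - del/2)). lra.
  - assert (H' : is_derive (fun s => - f s) t (- d)) by (apply (is_derive_opp f t d H)).
    destruct (der_neg _ t _ H' ltac:(lra)) as [del [Hd Hf]].
    destruct (Hf (del/2) ltac:(lra)). specialize (Hm (t + del/2)). lra.
Qed.

Lemma der_mul_exp (x dx : R -> R) (K : R) : (forall s, is_derive x s (dx s)) ->
  forall s, is_derive (fun s => x s * exp (K * s)) s ((dx s + K * x s) * exp (K * s)).
Proof.
  intros H s.
  auto_derive. exists (dx s); apply H.
  replace (Derive (fun x0 : R => x x0) s) with (dx s) by (symmetry; apply is_derive_unique; apply H). ring.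
Qed.

Lemma decr (f df : R -> R) (a b : R) : (forall t, is_derive f t (df t)) -> a <= b ->
  (forall c, a <= c <= b -> df c <= 0) -> f b <= f a.
Proof.
  intros H Hab Hp. destruct (mvt f df H a b Hab) as [c [Hc E]].
  assert (0 <= - df c * (b - a)) by (apply Rmult_le_pos; [ specialize (Hp c Hc); lra| lra]).
  assert (df c * (b - a) <= 0) by lra.
  lra.
Qed.

Lemma gron (E dE : R -> R) (K : R) : (forall t, is_derive E t (dE t)) ->
  (forall t, 0 <= E t) -> (forall t, Rabs (dE t) <= K * E t) ->
  forall t0, E t0 = 0 -> forall t, E t = 0.
Proof.
  intros HE Hp Hb t0 H0 t.
  destruct (Rle_dec t0 t) as [Hle|Hgt].
  - pose proof (der_mul_exp E dE (- K) HE) as Hd.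
    assert (E t * exp (- K * t) <= E t0 * exp (- K * t0)).
    { apply (decr _ _ t0 t Hd Hle). intros c _.
      specialize (Hb c). apply Rabs_le_between in Hb.
      assert (exp (- K * c) > 0) by apply exp_pos.
      assert (0 <= (- (dE c + - K * E c)) * exp (- K * c)) by (apply Rmult_le_pos; lra).
      lra. }
    rewrite H0, Rmult_0_l in H.
    assert (exp (- K * t) > 0) by apply exp_pos.
    specialize (Hp t).
    destruct Hp as [Hp|Hp]; auto.
    assert (0 < E t * exp (-K * t)) by (apply Rmult_lt_0_compat; lra). lra.
  - pose proof (der_mul_exp E dE K HE) as Hd.
    assert (E t * exp (K * t) <= E t0 * exp (K * t0)).
    { apply (incr _ _ t t0 Hd ltac:(lra)). intros c _.
      specialize (Hb c). apply Rabs_le_between in Hb.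
      assert (exp (K * c) > 0) by apply exp_pos.
      apply Rmult_le_pos; lra. }
    rewrite H0, Rmult_0_l in H.
    assert (exp (K * t) > 0) by apply exp_pos.
    specialize (Hp t).
    destruct Hp as [Hp|Hp]; auto.
    assert (0 < E t * exp (K * t)) by (apply Rmult_lt_0_compat; lra). lra.
Qed.

Lemma trap (x y A B C D : R -> R) (K : R) :
  (forall t, is_derive x t (A t * x t + B t * y t)) ->
  (forall t, is_derive y t (C t * x t + D t * y t)) ->
  (forall t, B t <= 0) -> (forall t, C t <= 0) ->
  (forall t, - K <= A t) -> (forall t, - K <= D t) ->
  forall t0, 0 < x t0 -> y t0 < 0 -> forall t2, t0 <= t2 -> 0 < x t2 /\ y t2 < 0.
Proof.
  intros Hx Hy HB HC HA HD t0 Hx0 Hy0 t2 Ht2.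
  set (E := fun s => t0 <= s <= t2 /\ forall tau, t0 <= tau <= s -> 0 < x tau /\ y tau < 0).
  assert (Eb : bound E). { exists t2. intros s [Hs _]. lra. }
  assert (Ee : exists s, E s).
  { exists t0. split; [lra|]. intros tau Ht. replace tau with t0 by lra. auto. }
  destruct (completeness E Eb Ee) as [m [Hub Hlub]].
  assert (Hm1 : t0 <= m) by (apply Hub; split; [lra|]; intros tau Ht; replace tau with t0 by lra; auto).
  assert (Hm2 : m <= t2) by (apply Hlub; intros s [Hs _]; lra).
  assert (P : forall tau, t0 <= tau < m -> 0 < x tau /\ y tau < 0).
  { intros tau Ht.
    destruct (classic (exists s, E s /\ tau < s)) as [[s [[_ Hs] Hts]]|Hn].
    - apply Hs; lra.
    - exfalso. assert (m <= tau); [|lra]. apply Hlub. intros s Es.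
      destruct (Rle_dec s tau) as [|Hc]; [auto|]. exfalso; apply Hn; exists s; split; auto; lra. }
  assert (Cx := fun t => der_cont x t _ (Hx t)).
  assert (Cy := fun t => der_cont y t _ (Hy t)).
  assert (Q : 0 <= x m /\ y m <= 0).
  { destruct (Req_dec m t0) as [Heq|Hne].
    { rewrite Heq; lra. }
    split.
    - destruct (Rle_dec 0 (x m)) as [|Hc]; auto. exfalso.
      destruct (cont_eps x m (Cx m) (- x m) ltac:(lra)) as [d [Hd Hs]].
      set (tau := Rmax t0 (m - d/2)).
      assert (t0 <= tau < m). { unfold tau; split; [apply Rmax_l|]. apply Rmax_lub_lt; lra. }
      assert (Rabs (tau - m) < d).
      { rewrite Rabs_left by lra. assert (m - d/2 <= tau) by apply Rmax_r. lra. }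
      specialize (Hs tau H0). apply Rabs_def2 in Hs. destruct (P tau H). lra.
    - destruct (Rle_dec (y m) 0) as [|Hc]; auto. exfalso.
      destruct (cont_eps y m (Cy m) (y m) ltac:(lra)) as [d [Hd Hs]].
      set (tau := Rmax t0 (m - d/2)).
      assert (t0 <= tau < m). { unfold tau; split; [apply Rmax_l|]. apply Rmax_lub_lt; lra. }
      assert (Rabs (tau - m) < d).
      { rewrite Rabs_left by lra. assert (m - d/2 <= tau) by apply Rmax_r. lra. }
      specialize (Hs tau H0). apply Rabs_def2 in Hs. destruct (P tau H). lra. }
  assert (R' : forall tau, t0 <= tau <= m -> 0 <= x tau /\ y tau <= 0).
  { intros tau Ht. destruct (Req_dec tau m) as [->|Hne]; auto.
    destruct (P tau ltac:(lra)); lra. }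
  assert (Sm : 0 < x m /\ y m < 0).
  { pose proof (der_mul_exp x _ K Hx) as DX.
    pose proof (der_mul_exp (fun s => - y s) (fun s => - (C s * x s + D s * y s)) K
       (fun t => is_derive_opp _ _ _ (Hy t))) as DY.
    assert (Ex : forall s, exp (K * s) > 0) by (intros; apply exp_pos).
    split.
    - assert (x t0 * exp (K * t0) <= x m * exp (K * m)).
      { apply (incr _ _ t0 m DX Hm1). intros c Hc. destruct (R' c Hc).
        apply Rmult_le_pos; [|left; apply Ex].
        specialize (HA c). specialize (HB c).
        assert (0 <= (A c + K) * x c) by (apply Rmult_le_pos; lra).
        assert (0 <= - B c * - y c) by (apply Rmult_le_pos; lra).
        lra. }
      assert (0 < x t0 * exp (K * t0)) by (apply Rmult_lt_0_compat; [lra|apply Ex]).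
      destruct (Rle_dec (x m) 0) as [Hc|]; [|lra].
      assert (x m * exp (K * m) <= 0).
      { assert (0 <= - x m * exp (K * m)) by (apply Rmult_le_pos; [lra| left; apply Ex]). lra. }
      lra.
    - assert (- y t0 * exp (K * t0) <= - y m * exp (K * m)).
      { apply (incr _ _ t0 m DY Hm1). intros c Hc. destruct (R' c Hc).
        apply Rmult_le_pos; [|left; apply Ex].
        specialize (HD c). specialize (HC c).
        assert (0 <= (D c + K) * - y c) by (apply Rmult_le_pos; lra).
        assert (0 <= - C c * x c) by (apply Rmult_le_pos; lra).
        lra. }
      assert (0 < - y t0 * exp (K * t0)) by (apply Rmult_lt_0_compat; [lra|apply Ex]).
      destruct (Rle_dec 0 (y m)) as [Hc|]; [|lra].
      assert (- y m * exp (K * m) <= 0).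
      { assert (0 <= y m * exp (K * m)) by (apply Rmult_le_pos; [lra| left; apply Ex]). lra. }
      lra. }
  destruct (Req_dec m t2) as [<-|Hne]; auto.
  exfalso.
  destruct (cont_eps x m (Cx m) (x m) ltac:(lra)) as [d1 [Hd1 Hs1]].
  destruct (cont_eps y m (Cy m) (- y m) ltac:(lra)) as [d2 [Hd2 Hs2]].
  set (s := Rmin (m + Rmin d1 d2 / 2) t2).
  assert (Hmin1 : Rmin d1 d2 <= d1) by apply Rmin_l.
  assert (Hmin2 : Rmin d1 d2 <= d2) by apply Rmin_r.
  assert (Hmin3 : 0 < Rmin d1 d2) by (apply Rmin_glb_lt; lra).
  assert (Hs : m < s <= m + Rmin d1 d2 / 2).
  { unfold s; split. apply Rmin_glb_lt; lra. apply Rmin_l. }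
  assert (E s).
  { split. split; [lra| apply Rmin_r].
    intros tau Ht. destruct (Rlt_dec tau m) as [Hl|Hl]. apply P; lra.
    assert (Rabs (tau - m) < d1) by (rewrite Rabs_right by lra; lra).
    assert (Rabs (tau - m) < d2) by (rewrite Rabs_right by lra; lra).
    specialize (Hs1 tau H). specialize (Hs2 tau H0).
    apply Rabs_def2 in Hs1. apply Rabs_def2 in Hs2. lra. }
  specialize (Hub s H). lra.
Qed.

Lemma per_nat (f : R -> R) (T : R) : (forall t, f (t + T) = f t) ->
  forall (k : nat) t, f (t + INR k * T) = f t.
Proof.
  intros H k. induction k as [|k IH]; intro t.
  - simpl. f_equal. ring.
  - rewrite S_INR. replace (t + (INR k + 1) * T) with ((t + INR k * T) + T) by ring.
    rewrite H. apply IH.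
Qed.

Lemma per_red (f : R -> R) (T : R) : 0 < T -> (forall t, f (t + T) = f t) ->
  forall t, exists s, 0 <= s <= T /\ f t = f s.
Proof.
  intros HT H t.
  destruct (base_Int_part (t / T)) as [H1 H2].
  set (n := Int_part (t / T)) in *.
  exists (t - IZR n * T).
  assert (t / T * T = t) by (field; lra).
  split.
  - split.
    + assert (0 <= (t / T - IZR n) * T) by (apply Rmult_le_pos; lra). nra.
    + assert ((t / T - IZR n) * T <= 1 * T) by (apply Rmult_le_compat_r; lra). nra.
  - destruct n as [|p|p].
    + simpl. f_equal. ring.
    + replace (IZR (Z.pos p)) with (INR (Pos.to_nat p)) by (rewrite INR_IPR; reflexivity).
      rewrite <- (per_nat f T H (Pos.to_nat p) (t - INR (Pos.to_nat p) * T)).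
      f_equal. ring.
    + replace (IZR (Z.neg p)) with (- INR (Pos.to_nat p)) by (rewrite INR_IPR; reflexivity).
      rewrite <- (per_nat f T H (Pos.to_nat p) t).
      f_equal. ring.
Qed.

Lemma per_max (f : R -> R) (T : R) : 0 < T -> (forall t, f (t + T) = f t) ->
  (forall t, continuity_pt f t) -> exists tm, forall t, f t <= f tm.
Proof.
  intros HT H Hc.
  destruct (continuity_ab_maj f 0 T ltac:(lra) (fun c _ => Hc c)) as [M [HM _]].
  exists M. intro t. destruct (per_red f T HT H t) as [s [Hs ->]]. auto.
Qed.

Lemma per_mono (u x : R -> R) (T : R) : 0 < T -> (forall t, u (t + T) = u t) ->
  (forall t, is_derive u t (x t)) -> forall s0, ~ (forall s, s0 <= s -> 0 < x s).
Proof.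
  intros HT H Hd s0 Hp.
  destruct (mvt u x Hd s0 (s0 + T) ltac:(lra)) as [c [Hc E]].
  rewrite H in E. specialize (Hp c ltac:(lra)).
  assert (0 < x c * (s0 + T - s0)) by (apply Rmult_lt_0_compat; lra). lra.
Qed.

Lemma der_x (a1 b1 c1 f : R) (u v du dv : R -> R) t :
  0 <= f -> 0 <= v t -> is_derive u t (du t) -> is_derive v t (dv t) ->
  is_derive (fun s => rhs_u a1 b1 c1 f (u s) (v s)) t
   ((a1 / (1 + f * v t) - 2 * b1 * u t - c1 * v t) * du t
    + (- u t * (a1 * f / (1 + f * v t) ^ 2 + c1)) * dv t).
Proof.
  intros Hf Hv Hu Hdv. unfold rhs_u.
  assert (0 <= f * v t) by (apply Rmult_le_pos; auto).
  auto_derive.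
  - repeat split; try (exists (du t); exact Hu); try (exists (dv t); exact Hdv). lra.
  - replace (Derive (fun x : R => u x) t) with (du t) by (symmetry; apply is_derive_unique; apply Hu).
    replace (Derive (fun x : R => v x) t) with (dv t) by (symmetry; apply is_derive_unique; apply Hdv).
    field. lra.
Qed.

Lemma der_y (a2 b2 c2 : R) (u v du dv : R -> R) t :
  is_derive u t (du t) -> is_derive v t (dv t) ->
  is_derive (fun s => rhs_v a2 b2 c2 (u s) (v s)) t
   ((- c2 * v t) * du t + (a2 - 2 * b2 * v t - c2 * u t) * dv t).
Proof.
  intros Hu Hdv. unfold rhs_v.
  auto_derive.
  - repeat split; try (exists (du t); exact Hu); try (exists (dv t); exact Hdv).
  - replace (Derive (fun x : R => u x) t) with (du t) by (symmetry; apply is_derive_unique; apply Hu).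
    replace (Derive (fun x : R => v x) t) with (dv t) by (symmetry; apply is_derive_unique; apply Hdv).
    ring.
Qed.

Lemma quad_bound (A B C D L x y : R) :
  Rabs A <= L -> Rabs B <= L -> Rabs C <= L -> Rabs D <= L ->
  Rabs (2 * x * (A * x + B * y) + 2 * y * (C * x + D * y)) <= 4 * L * (x ^ 2 + y ^ 2).
Proof.
  intros HA HB HC HD.
  apply Rabs_le_between in HA, HB, HC, HD.
  apply Rabs_le_between.
  assert (0 <= (L - A) * x^2) by (apply Rmult_le_pos; [lra | apply pow2_ge_0]).
  assert (0 <= (L + A) * x^2) by (apply Rmult_le_pos; [lra | apply pow2_ge_0]).
  assert (0 <= (L - D) * y^2) by (apply Rmult_le_pos; [lra | apply pow2_ge_0]).
  assert (0 <= (L + D) * y^2) by (apply Rmult_le_pos; [lra | apply pow2_ge_0]).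
  assert (0 <= (L - B) * (x + y)^2) by (apply Rmult_le_pos; [lra | apply pow2_ge_0]).
  assert (0 <= (L + B) * (x + y)^2) by (apply Rmult_le_pos; [lra | apply pow2_ge_0]).
  assert (0 <= (L - B) * (x - y)^2) by (apply Rmult_le_pos; [lra | apply pow2_ge_0]).
  assert (0 <= (L + B) * (x - y)^2) by (apply Rmult_le_pos; [lra | apply pow2_ge_0]).
  assert (0 <= (L - C) * (x + y)^2) by (apply Rmult_le_pos; [lra | apply pow2_ge_0]).
  assert (0 <= (L + C) * (x + y)^2) by (apply Rmult_le_pos; [lra | apply pow2_ge_0]).
  assert (0 <= (L - C) * (x - y)^2) by (apply Rmult_le_pos; [lra | apply pow2_ge_0]).
  assert (0 <= (L + C) * (x - y)^2) by (apply Rmult_le_pos; [lra | apply pow2_ge_0]).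
  split; nra.
Qed.

Lemma der_sq (x y dx dy : R -> R) : (forall t, is_derive x t (dx t)) -> (forall t, is_derive y t (dy t)) ->
  forall t, is_derive (fun t => x t ^ 2 + y t ^ 2) t (2 * x t * dx t + 2 * y t * dy t).
Proof.
  intros Hx Hy t. auto_derive.
  - repeat split; [exists (dx t); apply Hx | exists (dy t); apply Hy].
  - replace (Derive (fun s : R => x s) t) with (dx t) by (symmetry; apply is_derive_unique; apply Hx).
    replace (Derive (fun s : R => y s) t) with (dy t) by (symmetry; apply is_derive_unique; apply Hy).
    ring.
Qed.

Lemma const_fun (u x : R -> R) : (forall t, is_derive u t (x t)) -> (forall t, x t = 0) ->
  forall a b, u a = u b.
Proof.
  intros Hd H0 a b. destruct (Rle_dec a b) as [H|H].
  - destruct (mvt u x Hd a b H) as [c [_ E]]. rewrite H0 in E. lra.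
  - destruct (mvt u x Hd b a ltac:(lra)) as [c [_ E]]. rewrite H0 in E. lra.
Qed.

Theorem mainTheorem10 (a1 a2 b1 b2 c1 c2 f : R) :
  0 < a1 -> 0 < a2 -> 0 < b1 -> 0 < b2 -> 0 < c1 -> 0 < c2 -> 0 <= f ->
  forall u v : R -> R,
    in_quadrant u v -> ~ is_periodic_orbit a1 a2 b1 b2 c1 c2 f u v.
Proof.
  intros ha1 ha2 hb1 hb2 hc1 hc2 hf u v Hq [Hsol [[T [HT Hper]] [t1 [t2 Hnc]]]].
  pose (x := fun t => rhs_u a1 b1 c1 f (u t) (v t)).
  pose (y := fun t => rhs_v a2 b2 c2 (u t) (v t)).
  assert (Hu : forall t, is_derive u t (x t)) by (intro t; apply (Hsol t)).
  assert (Hv : forall t, is_derive v t (y t)) by (intro t; apply (Hsol t)).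
  assert (Hpu : forall t, u (t + T) = u t) by (intro t; apply (Hper t)).
  assert (Hpv : forall t, v (t + T) = v t) by (intro t; apply (Hper t)).
  destruct (per_max u T HT Hpu (fun t => der_cont u t _ (Hu t))) as [tu Hmu].
  destruct (per_max v T HT Hpv (fun t => der_cont v t _ (Hv t))) as [tv Hmv].
  pose (A := fun t => a1 / (1 + f * v t) - 2 * b1 * u t - c1 * v t).
  pose (B := fun t => - u t * (a1 * f / (1 + f * v t) ^ 2 + c1)).
  pose (C := fun t => - c2 * v t).
  pose (D := fun t => a2 - 2 * b2 * v t - c2 * u t).
  assert (Hx : forall t, is_derive x t (A t * x t + B t * y t)).
  { intro t. exact (der_x a1 b1 c1 f u v x y t hf (proj2 (Hq t)) (Hu t) (Hv t)). }
  assert (Hy : forall t, is_derive y t (C t * x t + D t * y t)).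
  { intro t. exact (der_y a2 b2 c2 u v x y t (Hu t) (Hv t)). }
  set (Mu := u tu) in *. set (Mv := v tv) in *.
  assert (Hw : forall t, 0 < a1 / (1 + f * v t) <= a1 /\ 0 <= a1 * f / (1 + f * v t) ^ 2 <= a1 * f).
  { intro t. assert (0 <= f * v t) by (apply Rmult_le_pos; [lra | apply (Hq t)]).
    assert (0 < 1 + f * v t) by lra.
    split; split.
    - apply Rdiv_lt_0_compat; lra.
    - unfold Rdiv. rewrite <- (Rmult_1_r a1) at 2. apply Rmult_le_compat_l; [lra|].
      rewrite <- Rinv_1. apply Rinv_le_contravar; lra.
    - apply Rdiv_le_0_compat; [apply Rmult_le_pos; lra| apply pow_lt; lra].
    - unfold Rdiv. rewrite <- (Rmult_1_r (a1 * f)) at 2. apply Rmult_le_compat_l; [apply Rmult_le_pos; lra|].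
      rewrite <- Rinv_1. apply Rinv_le_contravar; [lra|]. 
      assert (1 <= (1 + f * v t)) by lra. nra. }
  assert (Hbu : forall t, 0 <= u t <= Mu) by (intro t; split; [apply (Hq t)| apply Hmu]).
  assert (Hbv : forall t, 0 <= v t <= Mv) by (intro t; split; [apply (Hq t)| apply Hmv]).
  assert (HB : forall t, B t <= 0).
  { intro t. unfold B. destruct (Hw t). destruct (Hbu t).
    assert (0 <= u t * (a1 * f / (1 + f * v t) ^ 2 + c1)) by (apply Rmult_le_pos; lra). lra. }
  assert (HC : forall t, C t <= 0).
  { intro t. unfold C. destruct (Hbv t). nra. }
  set (K := 2 * b1 * Mu + c1 * Mv + 2 * b2 * Mv + c2 * Mu).
  assert (HA : forall t, - K <= A t).
  { intro t. unfold A, K. destruct (Hw t). destruct (Hbu t), (Hbv t).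
    assert (b1 * u t <= b1 * Mu) by (apply Rmult_le_compat_l; lra).
    assert (c1 * v t <= c1 * Mv) by (apply Rmult_le_compat_l; lra).
    assert (0 <= b2 * Mv) by (apply Rmult_le_pos; lra).
    assert (0 <= c2 * Mu) by (apply Rmult_le_pos; lra). lra. }
  assert (HD : forall t, - K <= D t).
  { intro t. unfold D, K. destruct (Hbu t), (Hbv t).
    assert (b2 * v t <= b2 * Mv) by (apply Rmult_le_compat_l; lra).
    assert (c2 * u t <= c2 * Mu) by (apply Rmult_le_compat_l; lra).
    assert (0 <= b1 * Mu) by (apply Rmult_le_pos; lra).
    assert (0 <= c1 * Mv) by (apply Rmult_le_pos; lra). lra. }
  assert (HK : 0 <= K).
  { unfold K. destruct (Hbu tu), (Hbv tv).
    assert (0 <= b1 * Mu) by (apply Rmult_le_pos; lra).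
    assert (0 <= c1 * Mv) by (apply Rmult_le_pos; lra).
    assert (0 <= b2 * Mv) by (apply Rmult_le_pos; lra).
    assert (0 <= c2 * Mu) by (apply Rmult_le_pos; lra). lra. }
  set (L := K + a1 + Mu * (a1 * f + c1) + c2 * Mv + a2).
  assert (HL1 : 0 <= Mu * (a1 * f + c1)).
  { destruct (Hbu tu). apply Rmult_le_pos; [lra|]. assert (0 <= a1 * f) by (apply Rmult_le_pos; lra). lra. }
  assert (HL2 : 0 <= c2 * Mv) by (destruct (Hbv tv); apply Rmult_le_pos; lra).
  assert (HAb : forall t, Rabs (A t) <= L).
  { intro t. apply Rabs_le_between. specialize (HA t). destruct (Hw t). destruct (Hbu t), (Hbv t).
    assert (0 <= b1 * u t) by (apply Rmult_le_pos; lra).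
    assert (0 <= c1 * v t) by (apply Rmult_le_pos; lra).
    unfold L; unfold A in *; lra. }
  assert (HDb : forall t, Rabs (D t) <= L).
  { intro t. apply Rabs_le_between. specialize (HD t). destruct (Hbu t), (Hbv t).
    assert (0 <= b2 * v t) by (apply Rmult_le_pos; lra).
    assert (0 <= c2 * u t) by (apply Rmult_le_pos; lra).
    unfold L; unfold D in *; lra. }
  assert (HCb : forall t, Rabs (C t) <= L).
  { intro t. apply Rabs_le_between. specialize (HC t). destruct (Hbv t).
    assert (c2 * v t <= c2 * Mv) by (apply Rmult_le_compat_l; lra).
    unfold L; unfold C in *; lra. }
  assert (HBb : forall t, Rabs (B t) <= L).
  { intro t. apply Rabs_le_between. specialize (HB t). destruct (Hbu t), (Hw t).
    assert (u t * (a1 * f / (1 + f * v t) ^ 2 + c1) <= Mu * (a1 * f + c1)).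
    { apply Rmult_le_compat; lra. }
    unfold L; unfold B in *; lra. }
  assert (Hx0 : x tu = 0) by exact (der_max u tu (x tu) (Hu tu) Hmu).
  assert (Key : exists s, x s = 0 /\ y s = 0).
  { destruct (Rle_dec (u tu) 0) as [Hz|Hpos].
    - assert (Hu0 : forall t, u t = 0) by (intro t; destruct (Hbu t); fold Mu in Hz; lra).
      exists tv. split.
      + unfold x, rhs_u. rewrite Hu0. unfold Rdiv. ring.
      + exact (der_max v tv (y tv) (Hv tv) Hmv).
    - exists tu. split; auto.
      assert (HBs : B tu < 0).
      { unfold B. destruct (Hw tu).
        assert (0 < u tu * (a1 * f / (1 + f * v tu) ^ 2 + c1)) by (apply Rmult_lt_0_compat; lra). lra. }
      destruct (Rtotal_order (y tu) 0) as [Hneg|[Heq|Hposy]]; auto; exfalso.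
      + (* x' > 0, enter quadrant x>0,y<0 *)
        assert (Hdx : is_derive (fun t => - x t) tu (- (A tu * x tu + B tu * y tu))).
        { apply (is_derive_opp x tu _ (Hx tu)). }
        destruct (der_neg _ tu _ Hdx) as [d1 [Hd1 Hs1]].
        { rewrite Hx0. assert (0 < B tu * y tu) by nra. lra. }
        destruct (cont_eps y tu (der_cont y tu _ (Hy tu)) (- y tu) ltac:(lra)) as [d2 [Hd2 Hs2]].
        set (h := Rmin d1 d2 / 2).
        assert (Hh1 : Rmin d1 d2 <= d1) by apply Rmin_l.
        assert (Hh2 : Rmin d1 d2 <= d2) by apply Rmin_r.
        assert (Hh3 : 0 < Rmin d1 d2) by (apply Rmin_glb_lt; lra).
        destruct (Hs1 h ltac:(unfold h; lra)) as [Hxa _].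
        assert (Hya : Rabs (tu + h - tu) < d2) by (rewrite Rabs_right; unfold h; lra).
        specialize (Hs2 _ Hya). apply Rabs_def2 in Hs2.
        assert (Tr := trap x y A B C D K Hx Hy HB HC HA HD (tu + h) ltac:(lra) ltac:(lra)).
        apply (per_mono u x T HT Hpu Hu (tu + h)). intros s Hs. apply (Tr s Hs).
      + assert (Hdx : is_derive x tu (A tu * x tu + B tu * y tu)) by apply Hx.
        destruct (der_neg _ tu _ Hdx) as [d1 [Hd1 Hs1]].
        { rewrite Hx0. assert (B tu * y tu < 0) by nra. lra. }
        destruct (cont_eps y tu (der_cont y tu _ (Hy tu)) (y tu) ltac:(lra)) as [d2 [Hd2 Hs2]].
        set (h := Rmin d1 d2 / 2).
        assert (Hh1 : Rmin d1 d2 <= d1) by apply Rmin_l.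
        assert (Hh2 : Rmin d1 d2 <= d2) by apply Rmin_r.
        assert (Hh3 : 0 < Rmin d1 d2) by (apply Rmin_glb_lt; lra).
        destruct (Hs1 h ltac:(unfold h; lra)) as [Hxa _].
        assert (Hya : Rabs (tu + h - tu) < d2) by (rewrite Rabs_right; unfold h; lra).
        specialize (Hs2 _ Hya). apply Rabs_def2 in Hs2.
        assert (Hx' : forall t, is_derive (fun t => - x t) t (A t * (- x t) + B t * (- y t))).
        { intro t. replace (A t * - x t + B t * - y t) with (- (A t * x t + B t * y t)) by ring.
          apply (is_derive_opp x t _ (Hx t)). }
        assert (Hy' : forall t, is_derive (fun t => - y t) t (C t * (- x t) + D t * (- y t))).
        { intro t. replace (C t * - x t + D t * - y t) with (- (C t * x t + D t * y t)) by ring.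
          apply (is_derive_opp y t _ (Hy t)). }
        assert (Tr := trap (fun t => - x t) (fun t => - y t) A B C D K Hx' Hy' HB HC HA HD (tu + h) ltac:(lra) ltac:(lra)).
        assert (Hu' : forall t, is_derive (fun t => - u t) t (- x t)) by (intro t; apply (is_derive_opp u t _ (Hu t))).
        apply (per_mono (fun t => - u t) (fun t => - x t) T HT ltac:(intro t; simpl; rewrite Hpu; auto) Hu' (tu + h)).
        intros s Hs. apply (Tr s Hs). }
  destruct Key as [s0 [Hxs Hys]].
  assert (HE := gron (fun t => x t ^ 2 + y t ^ 2) _ (4 * L)
     (der_sq x y _ _ Hx Hy)
     ltac:(intro t; nra)
     ltac:(intro t; apply quad_bound; auto) s0 ltac:(cbv beta; rewrite Hxs, Hys; ring)).
  assert (Hx00 : forall t, x t = 0) by (intro t; specialize (HE t); simpl in HE; nra).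
  assert (Hy00 : forall t, y t = 0) by (intro t; specialize (HE t); simpl in HE; nra).
  destruct Hnc as [Hn|Hn]; apply Hn.
  - apply (const_fun u x Hu Hx00).
  - apply (const_fun v y Hv Hy00).
Qed.
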